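(* Let $\mathcal{M}$, $\pi_b$, $\pi_e$ be as in the context, and assume the reward decomposition (R), the transition factorisation (P), the policy factorisation (F) for both $\pi_b$ and $\pi_e$, and factor-wise absolute continuity (AC). Let $\mathcal{D}=\{\tau^{(n)}\}_{n=1}^N$ consist of $N$ independent trajectories generated by $\pi_b$. Then the decomposed IS estimator $$\hat Q^{DecIS}_{\pi_e}=\sum_{d=1}^{D}\frac1N\sum_{n=1}^N\sum_{t=0}^{T}\gamma^t\,\rho^{(n),d}_{0:T}\,r^d(z^{(n),d}_t,a^{(n),d}_t)$$ and the decomposed per-decision IS estimator $$\hat Q^{DecPDIS}_{\pi_e}=\sum_{d=1}^{D}\frac1N\sum_{n=1}^N\sum_{t=0}^{T}\gamma^t\,\rho^{(n),d}_{0:t}\,r^d(z^{(n),d}_t,a^{(n),d}_t)$$ are both unbiased estimators of $V_{\pi_e}=\mathbb{E}_{\pi_e}\big[\sum_{t=0}^T\gamma^t r(s_t,a_t)\big]$, i.e. $\mathbb{E}_{\pi_b}[\hat Q^{DecIS}_{\pi_e}]=\mathbb{E}_{\pi_b}[\hat Q^{DecPDIS}_{\pi_e}]=V_{\pi_e}$.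
   Context: A finite-horizon MDP has finite state space $\mathcal{S}$, action space $\mathcal{A}=\mathcal{A}^1\times\cdots\times\mathcal{A}^D$ (finite), so each action is $a=(a^1,\dots,a^D)$ with $a^d\in\mathcal{A}^d$; transition kernel $p(\cdot\mid s,a)$, a deterministic reward function $r:\mathcal{S}\times\mathcal{A}\to\mathbb{R}$, initial state distribution $d_1$, discount $\gamma\in[0,1]$ and horizon $T$. A (stationary) policy $\pi$ gives a distribution $\pi(\cdot\mid s)$ on $\mathcal{A}$. A trajectory under $\pi$ is $s_0\sim d_1$, $a_t\sim\pi(\cdot\mid s_t)$, $s_{t+1}\sim p(\cdot\mid s_t,a_t)$ for $t=0,\dots,T$; $\mathbb{E}_\pi$ denotes expectation over such trajectories. There is a state abstraction map $\phi(s)=(z^1,\dots,z^D)$ with $z^d\in\mathcal{Z}^d$ (finite), and we write $z^d_t$ for the $d$-th component of $\phi(s_t)$. Standing factorisation assumptions: (R) $r(s,a)=\sum_{d=1}^D r^d(z^d,a^d)$ for functions $r^d:\mathcal{Z}^d\times\mathcal{A}^d\to\mathbb{R}$, where $\phi(s)=(z^1,\dots,z^D)$; (P) for all $s,s',a$: $\sum_{\tilde s\in\phi^{-1}(\phi(s'))}p(\tilde s\mid s,a)=\prod_{d=1}^D p^d(z'^d\mid z^d,a^d)$ for sub-transition kernels $p^d$ on $\mathcal{Z}^d$, where $\phi(s')=(z'^1,\dots,z'^D)$; (F) a policy $\pi$ is factored if $\pi(a\mid s)=\prod_{d=1}^D\pi^d(a^d\mid z^d)$ for sub-policies $\pi^d(\cdot\mid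 z^d)$ on $\mathcal{A}^d$. (AC) For all $d$, $z^d$, $a^d$: if $\pi_b^d(a^d\mid z^d)=0$ then $\pi_e^d(a^d\mid z^d)=0$. For trajectory $n$ with sub-actions $a^{(n),d}_t$ and abstract states $z^{(n),d}_t$, the factor-$d$ importance ratio is $\rho^{(n),d}_{0:t}=\prod_{t'=0}^{t}\frac{\pi_e^d(a^{(n),d}_{t'}\mid z^{(n),d}_{t'})}{\pi_b^d(a^{(n),d}_{t'}\mid z^{(n),d}_{t'})}$. *)

(* Defs.v *)
From HB Require Import structures.
From mathcomp Require Import all_boot all_order all_algebra.
Set Implicit Arguments. Unset Strict Implicit. Unset Printing Implicit Defensive.
Import Order.TTheory GRing.Theory Num.Theory.
Local Open Scope ring_scope.

(* A finite-horizon factored MDP.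
   - S : finite state space
   - D factors; sub-action spaces Ad d, abstract sub-state spaces Zd d
   - an action is a dependent finite function a : {dffun forall d, Ad d}
   - phi s : {dffun forall d, Zd d} is the state abstraction
   - a trajectory (s_0,a_0,...,s_T,a_T) is a finite function 'I_T.+1 -> S * action *)

Definition action (D : nat) (Ad : 'I_D -> finType) := {dffun forall d : 'I_D, Ad d}.
Definition abstr (D : nat) (Zd : 'I_D -> finType) := {dffun forall d : 'I_D, Zd d}.
Definition traj (S : finType) (D : nat) (Ad : 'I_D -> finType) (T : nat) :=
  {ffun 'I_T.+1 -> (S * action Ad)%type}.

Section MDP.
Variables (R : realFieldType) (S : finType) (D : nat) (Ad Zd : 'I_D -> finType) (T : nat).

Definition st (tau : traj S Ad T) (t : nat) : S := (tau (inord t)).1.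
Definition ac (tau : traj S Ad T) (t : nat) : action Ad := (tau (inord t)).2.

Definition is_distr (X : finType) (f : X -> R) :=
  (forall x, 0 <= f x) /\ \sum_(x : X) f x = 1.

(* probability of the trajectory (s_0,a_0,...,s_T,a_T) under policy pi:
   d1(s_0) prod_{t=0}^T pi(a_t|s_t) prod_{t=0}^{T-1} p(s_{t+1}|s_t,a_t).
   (s_{T+1} is marginalized out; it does not affect any quantity below.) *)
Definition traj_prob (d1 : S -> R) (p : S -> action Ad -> S -> R)
  (pi : S -> action Ad -> R) (tau : traj S Ad T) : R :=
  d1 (st tau 0) * (\prod_(t < T.+1) pi (st tau t) (ac tau t))
  * \prod_(t < T) p (st tau t) (ac tau t) (st tau t.+1).

Definition Etraj d1 p pi (f : traj S Ad T -> R) : R :=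
  \sum_(tau : traj S Ad T) traj_prob d1 p pi tau * f tau.

Definition Edata (N : nat) d1 p pi (f : {ffun 'I_N -> traj S Ad T} -> R) : R :=
  \sum_(data : {ffun 'I_N -> traj S Ad T})
     (\prod_(n < N) traj_prob d1 p pi (data n)) * f data.

Definition value d1 p pi (r : S -> action Ad -> R) (gamma : R) : R :=
  Etraj d1 p pi (fun tau => \sum_(t < T.+1) gamma ^+ t * r (st tau t) (ac tau t)).

Definition rho (phi : S -> abstr Zd)
  (pie pib : forall d : 'I_D, Zd d -> Ad d -> R) (d : 'I_D) (tau : traj S Ad T) (t : nat) : R :=
  \prod_(t' < t.+1)
     (pie d (phi (st tau t') d) (ac tau t' d) / pib d (phi (st tau t') d) (ac tau t' d)).

Definition QDecIS (N : nat) phi pie pib (rd : forall d : 'I_D, Zd d -> Ad d -> R) (gamma : R)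
  (data : {ffun 'I_N -> traj S Ad T}) : R :=
  \sum_(d < D) (N%:R)^-1 * \sum_(n < N) \sum_(t < T.+1)
     gamma ^+ t * rho phi pie pib d (data n) T
       * rd d (phi (st (data n) t) d) (ac (data n) t d).

Definition QDecPDIS (N : nat) phi pie pib (rd : forall d : 'I_D, Zd d -> Ad d -> R) (gamma : R)
  (data : {ffun 'I_N -> traj S Ad T}) : R :=
  \sum_(d < D) (N%:R)^-1 * \sum_(n < N) \sum_(t < T.+1)
     gamma ^+ t * rho phi pie pib d (data n) t
       * rd d (phi (st (data n) t) d) (ac (data n) t d).

End MDP.

(* Main.v *)
Require Import Defs.
From HB Require Import structures.
From mathcomp Require Import all_boot all_order all_algebra.
Import Order.TTheory GRing.Theory Num.Theory.
From mathcomp Require Import ring.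
Local Open Scope ring_scope.

Lemma dffun_distr (R : comNzRingType) (I : finType) (U : I -> finType) (F : forall i, U i -> R) :
  \prod_i \sum_(x : U i) F i x = \sum_(a : {dffun forall i, U i}) \prod_i F i (a i).
Proof.
transitivity (\prod_i \sum_(j in tagged_with U i) untag 0 (F i) j).
  by apply: eq_bigr => i _; rewrite (big_tag F i).
rewrite bigA_distr_big_dep.
pose P_ := fun i => [ffun x => F i x].
transitivity (\sum_(t : fprod U) \prod_(i in I) P_ i (t i)); last first.
  rewrite (reindex (@dffun_of_fprod _ U)); last exact/onW_bij/dffun_of_fprod_bij.
  by apply: eq_bigr => t _; apply: eq_bigr => i _; rewrite /P_ !ffunE.
rewrite big_fprod; apply: eq_bigr => g _; apply: eq_bigr => i _.
rewrite /untag; case: (g i) => j x /=; case: eqP => // e.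
by rewrite /P_ ffunE.
Qed.

Lemma factor_sum (R : comNzRingType) (D : nat) (U : 'I_D -> finType)
  (f : forall j, U j -> R) (d : 'I_D) (H : U d -> R) :
  (forall j, j != d -> \sum_(x : U j) f j x = 1) ->
  \sum_(a : {dffun forall j, U j}) (\prod_j f j (a j)) * H (a d) = \sum_(x : U d) f d x * H x.
Proof.
move=> hf.
have untagT (x : U d) : untag 1 H (Tagged U x) = H x.
  by rewrite (@untagE _ U _ 1 d H (Tagged U x) (erefl d)).
pose G j (y : U j) := f j y * untag 1 H (Tagged U y).
have HG a : (\prod_j f j (a j)) * H (a d) = \prod_j G j (a j).
  rewrite /G big_split /=; congr (_ * _).
  rewrite (bigD1 d) //= untagT big1 ?mulr1 //.
  by move=> j hj; rewrite untag_dflt.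
rewrite (eq_bigr (fun a : {dffun forall j, U j} => \prod_j G j (a j))); last by move=> a _; exact: HG.
rewrite -dffun_distr (bigD1 d) //= [X in _ * X]big1 ?mulr1.
  by apply: eq_bigr => x _; rewrite /G untagT.
move=> j hj; rewrite -(hf j hj); apply: eq_bigr => x _.
by rewrite /G untag_dflt ?mulr1.
Qed.
Section Gen.
Variables (R : fieldType) (X : finType).

Definition pth n (f : {ffun 'I_n.+1 -> X}) (t : nat) : X := f (inord t).
Definition Wt (mu : X -> R) (K : nat -> X -> X -> R) n (q : nat -> X) : R :=
  mu (q 0%N) * \prod_(t < n) K t (q t) (q t.+1).
Fixpoint alpha (mu : X -> R) (K : nat -> X -> X -> R) n : X -> R :=
  match n with 0 => mu | m.+1 => fun y => \sum_x alpha mu K m x * K m x y end.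

Definition ext n (g : {ffun 'I_n.+1 -> X}) (y : X) : {ffun 'I_n.+2 -> X} :=
  [ffun i : 'I_n.+2 => if (i < n.+1)%N then g (inord i) else y].
Definition spl n (f : {ffun 'I_n.+2 -> X}) : {ffun 'I_n.+1 -> X} * X :=
  ([ffun i : 'I_n.+1 => f (inord i)], f ord_max).

Arguments pth {n}. Arguments ext {n}. Arguments spl {n}. Arguments Wt mu K n q. Arguments alpha mu K n.

Lemma peel n (F : {ffun 'I_n.+2 -> X} -> R) :
  \sum_f F f = \sum_(g : {ffun 'I_n.+1 -> X}) \sum_y F (ext g y).
Proof.
rewrite pair_big /=.
rewrite (reindex (fun p : {ffun 'I_n.+1 -> X} * X => ext p.1 p.2)) //.
exists (@spl n).
  move=> [g y] _; rewrite /spl /ext /=; congr (_, _).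
    apply/ffunP => i; rewrite !ffunE inordK; last by rewrite ltnS ltnW // ltn_ord.
    by rewrite ltn_ord; congr (g _); apply/val_inj; rewrite /= !inordK // ltn_ord.
  by rewrite ffunE /= ltnn.
move=> f _; apply/ffunP => i; rewrite /spl /ext !ffunE /=.
case: ifP => hi.
  congr (f _); apply/val_inj; rewrite /= !inordK //.
congr (f _); apply/val_inj => /=.
by have := ltn_ord i; rewrite ltnS leq_eqVlt hi orbF => /eqP.
Qed.

Lemma pth_ext n (g : {ffun 'I_n.+1 -> X}) y t : (t <= n)%N -> pth (ext g y) t = pth g t.
Proof.
move=> ht; rewrite /pth /ext ffunE inordK; last by rewrite ltnS ltnW.
by rewrite ltnS ht.
Qed.

Lemma pth_ext_last n (g : {ffun 'I_n.+1 -> X}) y : pth (ext g y) n.+1 = y.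
Proof. by rewrite /pth /ext ffunE inordK // ltnn. Qed.

Lemma W_ext mu K n (g : {ffun 'I_n.+1 -> X}) y :
  Wt mu K n.+1 (pth (ext g y)) = Wt mu K n (pth g) * K n (pth g n) y.
Proof.
rewrite /Wt big_ord_recr /= pth_ext // pth_ext // pth_ext_last mulrA; congr (_ * _ * _).
apply: eq_bigr => i _; rewrite !pth_ext //; last exact: ltnW.
Qed.

Lemma peel0 (F : {ffun 'I_1 -> X} -> R) :
  \sum_f F f = \sum_x F [ffun _ => x].
Proof.
rewrite (reindex (fun x : X => [ffun _ : 'I_1 => x])) //.
exists (fun f : {ffun 'I_1 -> X} => f ord0) => [x _|f _]; first by rewrite ffunE.
by apply/ffunP => i; rewrite ffunE; congr (f _); apply/val_inj; case: i => -[].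
Qed.

Lemma tailG mu K h n m : (m <= n)%N ->
  (forall t x, (m <= t < n)%N -> \sum_y K t x y = 1) ->
  \sum_(f : {ffun 'I_n.+1 -> X}) Wt mu K n (pth f) * h (pth f m) = \sum_x alpha mu K m x * h x.
Proof.
elim: n m h => [|n IH] m h.
  rewrite leqn0 => /eqP -> _; rewrite peel0; apply: eq_bigr => x _.
  by rewrite /Wt /pth big_ord0 !ffunE mulr1.
rewrite leq_eqVlt => /orP [/eqP -> _ | hm hK].
  elim: n.+1 {IH} h => [|k IHk] h.
    rewrite peel0; apply: eq_bigr => x _.
    by rewrite /Wt /pth big_ord0 !ffunE mulr1.
  rewrite peel /=.
  transitivity (\sum_(g : {ffun 'I_k.+1 -> X}) Wt mu K k (pth g) *
        (\sum_y K k (pth g k) y * h y)).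
    apply: eq_bigr => g _; rewrite big_distrr; apply: eq_bigr => y _.
    by rewrite W_ext pth_ext_last; exact: esym (mulrA _ _ _).
  rewrite (IHk (fun x => \sum_y K k x y * h y)).
  transitivity (\sum_x \sum_y alpha mu K k x * (K k x y * h y)).
    by apply: eq_bigr => x _; rewrite big_distrr.
  rewrite exchange_big /=; apply: eq_bigr => y _; rewrite big_distrl /=.
  by apply: eq_bigr => x _; rewrite mulrA.
rewrite -ltnS in hm.
rewrite peel -(IH m h) //; last first.
  by move=> t x /andP[h1 h2]; apply: hK; rewrite h1 ltnW.
apply: eq_bigr => g _.
transitivity (\sum_y Wt mu K n (pth g) * h (pth g m) * K n (pth g n) y).
  apply: eq_bigr => y _; rewrite W_ext pth_ext // -?ltnS //.
  by rewrite mulrAC.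
by rewrite -big_distrr /= hK ?mulr1 // ltnSn andbT -ltnS.
Qed.


Lemma Elin (Y : finType) N (P F : Y -> R) (i : 'I_N) : \sum_y P y = 1 ->
  \sum_(g : {ffun 'I_N -> Y}) (\prod_n P (g n)) * F (g i) = \sum_y P y * F y.
Proof.
move=> hP.
transitivity (\sum_(g : {ffun 'I_N -> Y}) \prod_n (P (g n) * (if n == i then F (g n) else 1))).
  apply: eq_bigr => g _; rewrite big_split /=; congr (_ * _).
  by rewrite (bigD1 i) //= eqxx big1 ?mulr1 // => n /negbTE ->.
rewrite -(bigA_distr_bigA (fun (n : 'I_N) (y : Y) => P y * (if n == i then F y else 1))) (bigD1 i) //= [X in _ * X]big1 ?mulr1.
  by apply: eq_bigr => y _; rewrite eqxx.
by move=> n /negbTE hn; rewrite -[RHS]hP; apply: eq_bigr => y _; rewrite hn mulr1.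
Qed.

Lemma Eavg (Y : finType) N M (P : Y -> R) (G : 'I_M -> Y -> R) :
  (0 < N)%N -> N%:R != 0 :> R -> \sum_y P y = 1 ->
  \sum_(g : {ffun 'I_N -> Y}) (\prod_n P (g n)) * (N%:R^-1 * \sum_(n < N) \sum_(t < M) G t (g n))
  = \sum_(t < M) \sum_y P y * G t y.
Proof.
move=> N0 hN hP.
transitivity (N%:R^-1 * \sum_(n < N) \sum_(t < M) \sum_(g : {ffun 'I_N -> Y}) (\prod_n P (g n)) * G t (g n)).
  transitivity (\sum_(g : {ffun 'I_N -> Y}) \sum_(n < N) \sum_(t < M) N%:R^-1 * ((\prod_n P (g n)) * G t (g n))).
    apply: eq_bigr => g _; rewrite mulrCA big_distrr /= big_distrr /=; apply: eq_bigr => n _.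
    by rewrite big_distrr /= big_distrr.
  rewrite exchange_big big_distrr /=; apply: eq_bigr => n _.
  by rewrite exchange_big big_distrr /=; apply: eq_bigr => t _; rewrite big_distrr.
transitivity (N%:R^-1 * \sum_(n < N) \sum_(t < M) \sum_y P y * G t y).
  congr (_ * _); apply: eq_bigr => n _; apply: eq_bigr => t _.
  exact: (@Elin Y N P (G t) n hP).
rewrite sumr_const card_ord -(mulr_natl (\sum_(t < M) \sum_y P y * G t y) N) mulrA mulVf // mul1r.
by [].
Qed.

End Gen.

Arguments pth {X n}. Arguments ext {X n}. Arguments Wt {R X}. Arguments alpha {R X}.
Arguments tailG {R X}.

Section Dom.
Variables (R : realFieldType) (S : finType) (D : nat) (Ad Zd : 'I_D -> finType) (T : nat)
 (phi : S -> abstr Zd) (p : S -> action Ad -> S -> R) (d1 : S -> R)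
 (pib pie : S -> action Ad -> R) (pibd pied : forall d : 'I_D, Zd d -> Ad d -> R)
 (pd : forall d : 'I_D, Zd d -> Ad d -> Zd d -> R).
Hypotheses (Hp : forall s a, is_distr (p s a)) (Hd1 : is_distr d1)
 (Hpd : forall d z a, is_distr (pd d z a))
 (HP : forall s s' a, \sum_(s2 | phi s2 == phi s') p s a s2
                  = \prod_(d < D) pd d (phi s d) (a d) (phi s' d))
 (Hb : forall d z, is_distr (pibd d z)) (He : forall d z, is_distr (pied d z))
 (Hpib : forall s a, pib s a = \prod_(d < D) pibd d (phi s d) (a d))
 (Hpie : forall s a, pie s a = \prod_(d < D) pied d (phi s d) (a d))
 (HAC : forall d z a, pibd d z a = 0 -> pied d z a = 0).

Local Notation X := (S * action Ad)%type.

Lemma TM d (G : Zd d -> R) s a :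
  \sum_s' p s a s' * G (phi s' d) = \sum_z0 pd d (phi s d) (a d) z0 * G z0.
Proof.
pose Q (z : abstr Zd) := \prod_j pd j (phi s j) (a j) (z j).
pose E (z : abstr Zd) := \sum_(s' | phi s' == z) p s a s'.
have EQ z : E z = Q z.
  case: (pickP (fun s'' => phi s'' == z)) => [s'' /eqP hs|nz].
    by rewrite /E /Q -hs HP.
  have E0 z' : (forall s'', phi s'' != z') -> E z' = 0.
    by move=> h; rewrite /E big_pred0 // => s''; apply/negbTE.
  have sumE : \sum_z' E z' = 1.
    case: (Hp s a) => _ <-; rewrite [RHS](partition_big phi xpredT) //=.
  have sumQ : \sum_z' Q z' = 1.
    rewrite /Q -(@dffun_distr R _ Zd (fun j x => pd j (phi s j) (a j) x)).
    by apply: big1 => j _; case: (Hpd j (phi s j) (a j)).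
  have ge0 z' : 0 <= Q z' - E z'.
    case: (pickP (fun s'' => phi s'' == z')) => [s'' /eqP hs|nz'].
      by rewrite /E /Q -hs HP subrr.
    rewrite E0 ?subr0; last by move=> s''; rewrite nz'.
    by apply: prodr_ge0 => j _; case: (Hpd j (phi s j) (a j)).
  have /psumr_eq0P H0 : \sum_z' (Q z' - E z') = 0 by rewrite sumrB sumE sumQ subrr.
  by apply/eqP; rewrite eq_sym -subr_eq0; apply/eqP/H0.
rewrite (partition_big phi xpredT) //=.
transitivity (\sum_(z : abstr Zd) (\prod_j pd j (phi s j) (a j) (z j)) * G (z d)).
  apply: eq_bigr => z _; rewrite -[RHS]/(Q z * G (z d)) -EQ /E big_distrl /=.
  by apply: eq_bigr => s' /eqP <-.
apply: (@factor_sum R D Zd (fun j x => pd j (phi s j) (a j) x) d G).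
by move=> j _; case: (Hpd j (phi s j) (a j)).
Qed.


Lemma KLa (f : forall j, Zd j -> Ad j -> R) (hf : forall j z, \sum_x f j z x = 1)
  (z : abstr Zd) d (g : Ad d -> R) :
  \sum_(a : action Ad) (\prod_j f j (z j) (a j)) * g (a d) = \sum_a0 f d (z d) a0 * g a0.
Proof. by apply: (@factor_sum R D Ad (fun j x => f j (z j) x) d g) => j _; apply: hf. Qed.

Lemma KL (f : forall j, Zd j -> Ad j -> R) (hf : forall j z, \sum_x f j z x = 1)
  d (g : Zd d -> Ad d -> R) s a :
  \sum_(y : X) p s a y.1 * (\prod_j f j (phi y.1 j) (y.2 j)) * g (phi y.1 d) (y.2 d)
  = \sum_z0 pd d (phi s d) (a d) z0 * \sum_a0 f d z0 a0 * g z0 a0.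
Proof.
rewrite -(pair_bigA _ (fun s' (a' : action Ad) =>
   p s a s' * (\prod_j f j (phi s' j) (a' j)) * g (phi s' d) (a' d))) /=.
rewrite -(TM d (fun z0 => \sum_a0 f d z0 a0 * g z0 a0) s a).
apply: eq_bigr => s' _; rewrite -(KLa f hf (phi s') d (g (phi s' d))) big_distrr /=.
by apply: eq_bigr => a' _; rewrite mulrA.
Qed.

Definition w d (x : X) : R := pied d (phi x.1 d) (x.2 d) / pibd d (phi x.1 d) (x.2 d).
Definition muw (pi : S -> action Ad -> R) (ww : X -> R) (x : X) : R := d1 x.1 * pi x.1 x.2 * ww x.
Definition Kw (pi : S -> action Ad -> R) (ww : X -> R) (k : nat) (t : nat) (x y : X) : R :=
  p x.1 x.2 y.1 * pi y.1 y.2 * (if (t < k)%N then ww y else 1).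
Definition Phi d (Hd : Zd d -> Ad d -> R) (z : Zd d) (a : Ad d) : R :=
  \sum_z0 pd d z a z0 * \sum_a0 pied d z0 a0 * Hd z0 a0.

Lemma ACw d z a0 h : pibd d z a0 * (pied d z a0 / pibd d z a0 * h) = pied d z a0 * h.
Proof.
have [h0|h0] := eqVneq (pibd d z a0) 0.
  by rewrite h0 (HAC d z a0 h0) !mul0r.
by rewrite mulrA mulrCA mulfV // mulr1.
Qed.

Lemma sum_b d z : \sum_x pibd d z x = 1. Proof. by case: (Hb d z). Qed.
Lemma sum_e d z : \sum_x pied d z x = 1. Proof. by case: (He d z). Qed.

Lemma stepb d k t (Hd : Zd d -> Ad d -> R) (x : X) : (t < k)%N ->
  \sum_y Kw pib (w d) k t x y * Hd (phi y.1 d) (y.2 d) = Phi d Hd (phi x.1 d) (x.2 d).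
Proof.
move=> tk.
transitivity (\sum_(y : X) p x.1 x.2 y.1 * (\prod_j pibd j (phi y.1 j) (y.2 j)) *
   (fun z a => pied d z a / pibd d z a * Hd z a) (phi y.1 d) (y.2 d)).
  apply: eq_bigr => y _; rewrite /Kw tk Hpib /w /=.
  by rewrite -!mulrA.
rewrite (KL pibd sum_b d (fun z a => pied d z a / pibd d z a * Hd z a)); apply: eq_bigr => z0 _; congr (_ * _).
by apply: eq_bigr => a0 _; rewrite ACw.
Qed.

Lemma stepe d t (Hd : Zd d -> Ad d -> R) (x : X) :
  \sum_y Kw pie (fun _ => 1) 0 t x y * Hd (phi y.1 d) (y.2 d) = Phi d Hd (phi x.1 d) (x.2 d).
Proof.
rewrite /Phi -(KL pied sum_e d Hd); apply: eq_bigr => y _.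
by rewrite /Kw /= Hpie mulr1.
Qed.

Lemma Phi1 d z a : Phi d (fun _ _ => 1) z a = 1.
Proof.
rewrite /Phi -[RHS](proj2 (Hpd d z a)); apply: eq_bigr => z0 _.
by rewrite -[RHS]mulr1; congr (_ * _); under eq_bigr do rewrite mulr1; exact: sum_e.
Qed.

Lemma rowb d k t (x : X) : \sum_y Kw pib (w d) k t x y = 1.
Proof.
case: (ltnP t k) => tk.
  by rewrite -(Phi1 d (phi x.1 d) (x.2 d)) -(stepb d k t (fun _ _ => 1) x tk); apply: eq_bigr => *; rewrite mulr1.
transitivity (\sum_(y : X) p x.1 x.2 y.1 * (\prod_j pibd j (phi y.1 j) (y.2 j)) *
   (fun (z : Zd d) (a : Ad d) => (1 : R)) (phi y.1 d) (y.2 d)).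
  apply: eq_bigr => y _; rewrite /Kw ltnNge tk /= Hpib.
  by rewrite !mulr1.
rewrite (KL pibd sum_b d (fun _ _ => 1)) -[RHS](proj2 (Hpd d (phi x.1 d) (x.2 d))); apply: eq_bigr => z0 _.
by rewrite -[RHS]mulr1; congr (_ * _); under eq_bigr do rewrite mulr1; exact: sum_b.
Qed.

Lemma rowe (d : 'I_D) t (x : X) : \sum_y Kw pie (fun _ => 1) 0 t x y = 1.
Proof.
by rewrite -(Phi1 d (phi x.1 d) (x.2 d)) -(stepe d t (fun _ _ => 1) x); apply: eq_bigr => *; rewrite mulr1.
Qed.

Lemma init d (Hd : Zd d -> Ad d -> R) :
  \sum_x muw pib (w d) x * Hd (phi x.1 d) (x.2 d) =
  \sum_x muw pie (fun _ => 1) x * Hd (phi x.1 d) (x.2 d).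
Proof.
rewrite -(pair_bigA _ (fun s (a : action Ad) => muw pib (w d) (s, a) * Hd (phi s d) (a d))).
rewrite -(pair_bigA _ (fun s (a : action Ad) => muw pie (fun _ => 1) (s, a) * Hd (phi s d) (a d))).
apply: eq_bigr => s _.
transitivity (d1 s * \sum_(a : action Ad) (\prod_j pibd j (phi s j) (a j)) *
   (fun a0 => pied d (phi s d) a0 / pibd d (phi s d) a0 * Hd (phi s d) a0) (a d)).
  rewrite big_distrr; apply: eq_bigr => a _; rewrite /muw /w Hpib /=.
  by rewrite !mulrA.
rewrite (KLa pibd sum_b (phi s) d (fun a0 => pied d (phi s d) a0 / pibd d (phi s d) a0 * Hd (phi s d) a0)).
transitivity (d1 s * \sum_(a : action Ad) (\prod_j pied j (phi s j) (a j)) * Hd (phi s d) (a d)).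
  by rewrite (KLa pied sum_e (phi s) d (Hd (phi s d))); congr (_ * _); apply: eq_bigr => a0 _; rewrite ACw.
rewrite big_distrr; apply: eq_bigr => a _; rewrite /muw Hpie /=.
by rewrite mulr1 mulrA.
Qed.


Lemma inv d k m (Hd : Zd d -> Ad d -> R) : (m <= k)%N ->
  \sum_x alpha (muw pib (w d)) (Kw pib (w d) k) m x * Hd (phi x.1 d) (x.2 d) =
  \sum_x alpha (muw pie (fun _ => 1)) (Kw pie (fun _ => 1) 0) m x * Hd (phi x.1 d) (x.2 d).
Proof.
elim: m Hd => [|m IH] Hd hm; first exact: init.
have step (mu : X -> R) K (Psi : X -> R) :
   (forall x, \sum_(y : X) K m x y * Hd (phi y.1 d) (y.2 d) = Psi x) ->
   \sum_(y : X) (\sum_(x : X) alpha mu K m x * K m x y) * Hd (phi y.1 d) (y.2 d)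
   = \sum_(x : X) alpha mu K m x * Psi x.
  move=> hK.
  transitivity (\sum_y \sum_x alpha mu K m x * (K m x y * Hd (phi y.1 d) (y.2 d))).
    by apply: eq_bigr => y _; rewrite big_distrl; apply: eq_bigr => x _; rewrite mulrA.
  rewrite exchange_big /=; apply: eq_bigr => x _; rewrite -hK big_distrr //.
rewrite /= (step _ _ (fun x => Phi d Hd (phi x.1 d) (x.2 d))); last first.
  by move=> x; apply: stepb.
rewrite (step _ _ (fun x => Phi d Hd (phi x.1 d) (x.2 d))); last first.
  by move=> x; apply: stepe.
exact: IH (ltnW hm).
Qed.

Lemma trajW (pi : S -> action Ad -> R) (ww : X -> R) k (tau : traj S Ad T) : (k <= T)%N ->
  traj_prob d1 p pi tau * \prod_(t' < k.+1) ww (pth tau t') = Wt (muw pi ww) (Kw pi ww k) T (pth tau).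
Proof.
move=> kT; rewrite /traj_prob /Wt /muw /Kw !big_split /=.
rewrite [\prod_(t < T.+1) _]big_ord_recl [\prod_(t' < k.+1) _]big_ord_recl /=.
rewrite (big_ord_widen T (fun i : nat => ww (pth tau i.+1)) kT) (big_mkcond (fun i : 'I_T => (i < k)%N)) /=.
rewrite /st /ac /pth /=.
set A := d1 _; set B := pi _ _; set C := \prod_(i < T) pi _ _; set E := \prod_(i < T) p _ _ _.
set F := ww _; set G := \prod_(i < T) _.
ring.
Qed.

Lemma core d k t (Hd : Zd d -> Ad d -> R) : (t <= k)%N -> (k <= T)%N ->
 \sum_(tau : traj S Ad T) traj_prob d1 p pib tau * (rho phi pied pibd d tau k * Hd (phi (st tau t) d) (ac tau t d))
 = \sum_(tau : traj S Ad T) traj_prob d1 p pie tau * Hd (phi (st tau t) d) (ac tau t d).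
Proof.
move=> tk kT.
pose h (x : X) := Hd (phi x.1 d) (x.2 d).
transitivity (\sum_(tau : traj S Ad T) Wt (muw pib (w d)) (Kw pib (w d) k) T (pth tau) * h (pth tau t)).
  by apply: eq_bigr => tau _; rewrite -(trajW pib (w d) k tau kT) -[RHS]mulrA.
transitivity (\sum_(tau : traj S Ad T) Wt (muw pie (fun _ => 1)) (Kw pie (fun _ => 1) 0) T (pth tau) * h (pth tau t)); last first.
  apply: eq_bigr => tau _; rewrite -(trajW pie (fun _ => 1) 0 tau (leq0n T)).
  by rewrite big1 ?mulr1.
rewrite (tailG _ _ h T t (leq_trans tk kT)); last by move=> *; apply: rowb.
rewrite (tailG _ _ h T t (leq_trans tk kT)); last by move=> *; apply: (rowe d).
exact: inv.
Qed.


Lemma sumpi (pi : S -> action Ad -> R) (f : forall j, Zd j -> Ad j -> R)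
  (hf : forall j z, \sum_x f j z x = 1)
  (Hpi : forall s a, pi s a = \prod_(d < D) f d (phi s d) (a d)) s :
  \sum_(a : action Ad) pi s a = 1.
Proof.
rewrite (eq_bigr (fun a : action Ad => \prod_j f j (phi s j) (a j))); last by move=> a _; apply: Hpi.
rewrite -(@dffun_distr R _ Ad (fun j x => f j (phi s j) x)).
by apply: big1 => j _; apply: hf.
Qed.

Lemma sumtraj (pi : S -> action Ad -> R) (f : forall j, Zd j -> Ad j -> R)
  (hf : forall j z, \sum_x f j z x = 1)
  (Hpi : forall s a, pi s a = \prod_(d < D) f d (phi s d) (a d)) :
  \sum_(tau : traj S Ad T) traj_prob d1 p pi tau = 1.
Proof.
transitivity (\sum_(tau : traj S Ad T) Wt (muw pi (fun _ => 1)) (Kw pi (fun _ => 1) 0) T (pth tau) * (fun _ : X => 1) (pth tau 0)).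
  apply: eq_bigr => tau _; rewrite -(trajW pi (fun _ => 1) 0 tau (leq0n T)).
  by rewrite big1 ?mulr1.
rewrite (tailG _ _ (fun _ : X => 1) T 0 (leq0n T)); last first.
  move=> t x _; rewrite -[RHS](proj2 (Hp x.1 x.2)).
  rewrite -(pair_bigA _ (fun s' (a' : action Ad) => Kw pi (fun _ => 1) 0 t x (s', a'))) /=.
  apply: eq_bigr => s' _; rewrite /Kw /=.
  under eq_bigr do rewrite mulr1.
  by rewrite -big_distrr /= (sumpi pi f hf Hpi s') mulr1.
rewrite /= -[RHS](proj2 Hd1).
rewrite -(pair_bigA _ (fun s (a : action Ad) => muw pi (fun _ => 1) (s, a) * 1)) /=.
apply: eq_bigr => s _; rewrite /muw /=.
under eq_bigr do rewrite !mulr1.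
by rewrite -big_distrr /= (sumpi pi f hf Hpi s) mulr1.
Qed.

Lemma valueNF (r : S -> action Ad -> R) (rd : forall d : 'I_D, Zd d -> Ad d -> R) (gamma : R)
  (Hr : forall s a, r s a = \sum_(d < D) rd d (phi s d) (a d)) :
  value T d1 p pie r gamma = \sum_(d < D) \sum_(t < T.+1) gamma ^+ t *
     \sum_(tau : traj S Ad T) traj_prob d1 p pie tau * rd d (phi (st tau t) d) (ac tau t d).
Proof.
rewrite /value /Etraj.
transitivity (\sum_(tau : traj S Ad T) \sum_(t < T.+1) \sum_(d < D)
   gamma ^+ t * (traj_prob d1 p pie tau * rd d (phi (st tau t) d) (ac tau t d))).
  apply: eq_bigr => tau _; rewrite big_distrr /=; apply: eq_bigr => t _.
  rewrite Hr !big_distrr /=; apply: eq_bigr => d _; rewrite mulrCA //.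
rewrite exchange_big /=.
rewrite (eq_bigr (fun t : 'I_T.+1 => \sum_(d < D) \sum_(tau : traj S Ad T)
   gamma ^+ t * (traj_prob d1 p pie tau * rd d (phi (st tau t) d) (ac tau t d)))); last first.
  by move=> t _; rewrite exchange_big.
rewrite exchange_big /=; apply: eq_bigr => d _; apply: eq_bigr => t _.
by rewrite big_distrr.
Qed.

Lemma mainQ N (rd : forall d : 'I_D, Zd d -> Ad d -> R) (gamma : R) (kk : 'I_T.+1 -> nat)
  (hk1 : forall t : 'I_T.+1, (t <= kk t)%N) (hk2 : forall t, (kk t <= T)%N) :
  (0 < N)%N ->
  \sum_(data : {ffun 'I_N -> traj S Ad T})
     (\prod_(n < N) traj_prob d1 p pib (data n)) *
  (\sum_(d < D) (N%:R)^-1 * \sum_(n < N) \sum_(t < T.+1)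
     gamma ^+ t * rho phi pied pibd d (data n) (kk t)
       * rd d (phi (st (data n) t) d) (ac (data n) t d))
  = \sum_(d < D) \sum_(t < T.+1) gamma ^+ t *
     \sum_(tau : traj S Ad T) traj_prob d1 p pie tau * rd d (phi (st tau t) d) (ac tau t d).
Proof.
move=> N0.
have hN : N%:R != 0 :> R by rewrite pnatr_eq0 -lt0n.
have Pb := sumtraj pib pibd sum_b Hpib.
rewrite (eq_bigr (fun data : {ffun 'I_N -> traj S Ad T} => \sum_(d < D)
   (\prod_(n < N) traj_prob d1 p pib (data n)) * ((N%:R)^-1 * \sum_(n < N) \sum_(t < T.+1)
     gamma ^+ t * rho phi pied pibd d (data n) (kk t)
       * rd d (phi (st (data n) t) d) (ac (data n) t d)))); last by move=> *; rewrite big_distrr.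
rewrite exchange_big /=; apply: eq_bigr => d _.
rewrite (@Eavg R _ N T.+1 _ (fun (t : 'I_T.+1) tau => gamma ^+ t * rho phi pied pibd d tau (kk t)
       * rd d (phi (st tau t) d) (ac tau t d)) N0 hN Pb).
apply: eq_bigr => t _.
rewrite -(core d (kk t) t (rd d) (hk1 t) (hk2 t)) big_distrr /=.
by apply: eq_bigr => tau _; rewrite -mulrA mulrCA.
Qed.

End Dom.

Theorem theorem2 (R : realFieldType) (S : finType) (D : nat)
  (Ad Zd : 'I_D -> finType) (T N : nat)
  (phi : S -> abstr Zd)
  (p : S -> action Ad -> S -> R) (r : S -> action Ad -> R)
  (d1 : S -> R) (gamma : R)
  (pib pie : S -> action Ad -> R)
  (pibd pied : forall d : 'I_D, Zd d -> Ad d -> R)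
  (rd : forall d : 'I_D, Zd d -> Ad d -> R)
  (pd : forall d : 'I_D, Zd d -> Ad d -> Zd d -> R) :
  (* MDP well-formedness *)
  (forall s a, is_distr (p s a)) ->
  is_distr d1 ->
  0 <= gamma <= 1 ->
  (0 < N)%N ->
  (* (R) reward decomposition *)
  (forall s a, r s a = \sum_(d < D) rd d (phi s d) (a d)) ->
  (* (P) transition factorisation with sub-transition kernels p^d *)
  (forall d z a, is_distr (pd d z a)) ->
  (forall s s' a, \sum_(s2 | phi s2 == phi s') p s a s2
                  = \prod_(d < D) pd d (phi s d) (a d) (phi s' d)) ->
  (* (F) factored behaviour and evaluation policies *)
  (forall d z, is_distr (pibd d z)) ->
  (forall d z, is_distr (pied d z)) ->
  (forall s a, pib s a = \prod_(d < D) pibd d (phi s d) (a d)) ->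
  (forall s a, pie s a = \prod_(d < D) pied d (phi s d) (a d)) ->
  (* (AC) factor-wise absolute continuity *)
  (forall d z a, pibd d z a = 0 -> pied d z a = 0) ->
  @Edata R S D Ad T N d1 p pib (@QDecIS R S D Ad Zd T N phi pied pibd rd gamma) = value T d1 p pie r gamma /\
  @Edata R S D Ad T N d1 p pib (@QDecPDIS R S D Ad Zd T N phi pied pibd rd gamma) = value T d1 p pie r gamma.
Proof.
move=> Hp Hd1 hg N0 Hr Hpd HP Hb He Hpib Hpie HAC.
rewrite (@valueNF _ _ _ _ _ T phi p d1 pie r rd gamma Hr).
split.
  apply: (@mainQ _ _ _ _ _ _ _ _ _ _ _ _ _ _ Hp Hd1 Hpd HP Hb He Hpib Hpie HAC N rd gamma ( fun _ => T)) => //.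
  by move=> t; rewrite -ltnS ltn_ord.
apply: (@mainQ _ _ _ _ _ _ _ _ _ _ _ _ _ _ Hp Hd1 Hpd HP Hb He Hpib Hpie HAC N rd gamma ( fun t => nat_of_ord t)) => //.
by move=> t; rewrite -ltnS ltn_ord.
Qed.
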